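(* Fix integers $s\ge t\ge 1$ and $n\ge 0$. Let $\mathcal{B}_{s,t}(n)$ be the number of distinct sets of balls that can be on the lawn after $n$ turns of the $(s,t)$-tennis ball process. Then $\mathcal{B}_{s,t}(n)=|\mathrm{SVT}((n+1)^2,\rho)|$, where $\rho$ is the density on the shape $(n+1,n+1)$ with $\rho_{1,j}=t$ and $\rho_{2,j}=s-t$ for all $1\le j\le n+1$.
   Context: The $(s,t)$-tennis ball process: balls are numbered $1,2,\dots,ns$. There is a pool, initially empty. At turn $i$ ($1\le i\le n$), the balls numbered $(i-1)s+1,\dots,is$ are added to the pool, and then any $t$ balls of the pool are removed from it and thrown onto the lawn. After $n$ turns the lawn contains a set of $nt$ balls; $\mathcal{B}_{s,t}(n)$ counts the possible such sets over all possible choices. A density on a shape $\lambda$ is an assignment of a nonnegative integer $\rho_{i,j}$ to every cell $(i,j)$ (row $i$, column $j$); let $N=\sum\rho_{i,j}$. A standard set-valued Young tableau of shape $\lambda$ and density $\rho$ assigns to each cell $(i,j)$ a set $S_{i,j}$ with $|S_{i,j}|=\rho_{i,j}$, the sets partitioning $[N]$, such that every element of $S_{i,j}$ is smaller than every element of $S_{i,j+1}$ and of $S_{i+1,j}$ whenever those cells exist (conditions involving an empty set are vacuous). $\mathrm{SVT}(\lambda,\rho)$ is the set of these tableaux. *)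

(* Defs.v *)
From mathcomp Require Import all_boot.
Set Implicit Arguments. Unset Strict Implicit. Unset Printing Implicit Defensive.

(* ---------- The (s,t)-tennis ball process ----------
   Ball number b+1 (1 <= b+1 <= n*s) is represented by the ordinal b : 'I_(n*s).
   Turn i+1 (i : 'I_n) adds balls (i*s+1) .. ((i+1)*s), i.e. ordinals b < (i+1)*s.
   A run of the process is the sequence R of sets of balls thrown at each turn:
   at turn i+1 one throws t balls from the pool, i.e. t balls among those already
   added (b < (i+1)*s) and not thrown at an earlier turn. *)
Definition tennis_run (s t n : nat) (R : {ffun 'I_n -> {set 'I_(n * s)}}) : bool :=
  [forall i : 'I_n,
     (#|R i| == t)
     && [forall b in R i, b < i.+1 * s]
     && [forall j : 'I_n, (j < i) ==> [disjoint R j & R i]]].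

Definition lawn (s n : nat) (R : {ffun 'I_n -> {set 'I_(n * s)}}) : {set 'I_(n * s)} :=
  \bigcup_(i : 'I_n) R i.

Definition tennisB (s t n : nat) : nat :=
  #|[set L : {set 'I_(n * s)} |
      [exists R : {ffun 'I_n -> {set 'I_(n * s)}}, tennis_run t R && (L == lawn R)]]|.

(* ---------- Standard set-valued Young tableaux ----------
   A shape lam is a seq nat (row lengths, row 0 first); cells are (i,j) with
   i < size lam, j < nth 0 lam i (0-based: row i+1, column j+1 of the paper).
   A density is rho : nat -> nat -> nat (only its values on cells matter).
   Tableaux are families of sets S indexed by 'I_r * 'I_c (r rows, c = max row
   length); S is required to be empty outside the shape. *)
Definition in_shape (lam : seq nat) (i j : nat) : bool :=
  (i < size lam) && (j < nth 0 lam i).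

Definition shape_rows (lam : seq nat) : nat := size lam.
Definition shape_cols (lam : seq nat) : nat := \max_(x <- lam) x.

Definition svt_N (lam : seq nat) (rho : nat -> nat -> nat) : nat :=
  \sum_(i < size lam) \sum_(j < nth 0 lam i) rho i j.

Definition cell (lam : seq nat) := ('I_(shape_rows lam) * 'I_(shape_cols lam))%type.

Definition is_svt (lam : seq nat) (rho : nat -> nat -> nat)
    (S : {ffun cell lam -> {set 'I_(svt_N lam rho)}}) : bool :=
  [forall a : cell lam,
     if in_shape lam a.1 a.2 then #|S a| == rho a.1 a.2 else S a == set0]
  && [forall a : cell lam, forall b : cell lam, (a != b) ==> [disjoint S a & S b]]
  && (\bigcup_(a : cell lam) S a == setT)
  && [forall a : cell lam, forall b : cell lam,
        [&& in_shape lam a.1 a.2, in_shape lam b.1 b.2 &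
            ((b.1 == a.1 :> nat) && (b.2 == a.2.+1 :> nat))
            || ((b.1 == a.1.+1 :> nat) && (b.2 == a.2 :> nat))]
        ==> [forall x in S a, forall y in S b, x < y]].

Definition nSVT (lam : seq nat) (rho : nat -> nat -> nat) : nat :=
  #|[set S : {ffun cell lam -> {set 'I_(svt_N lam rho)}} | is_svt S]|.

Definition tennis_rho (s t : nat) : nat -> nat -> nat :=
  fun i _ => if i == 0 then t else s - t.

(* Main.v *)
Require Import Defs.
From mathcomp Require Import all_boot zify.
Set Implicit Arguments. Unset Strict Implicit. Unset Printing Implicit Defensive.

Section Cnt.
Variable M : nat.
Implicit Types X : {set 'I_M}.

Definition cnt X (m : nat) : nat := #|[set x in X | x < m]|.

Lemma cnt_mono X m m' : m <= m' -> cnt X m <= cnt X m'.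
Proof.
move=> h; apply: subset_leq_card; apply/subsetP=> x; rewrite !inE.
by case/andP=> -> /leq_trans; apply.
Qed.

Lemma cnt_le X m : cnt X m <= #|X|.
Proof. by apply: subset_leq_card; apply/subsetP=> x; rewrite inE => /andP[]. Qed.

Lemma cnt_full X m : M <= m -> cnt X m = #|X|.
Proof.
move=> h; apply: eq_card => x; rewrite !inE.
by rewrite (leq_trans (ltn_ord x) h) andbT.
Qed.

Lemma cnt_succ X (x : 'I_M) : x \in X -> cnt X x.+1 = (cnt X x).+1.
Proof.
move=> xX; rewrite /cnt -add1n.
have -> : [set y in X | y < x.+1] = x |: [set y in X | y < x].
  apply/setP=> y; rewrite !inE ltnS leq_eqVlt.
  case: (eqVneq y x) => [->|ne]; first by rewrite eqxx xX.
  have -> : (y == x :> nat) = false by apply/negbTE; apply: contra ne => /eqP e; apply/eqP/val_inj.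
  by [].
by rewrite cardsU1 inE ltnn andbF.
Qed.

Lemma cnt_lt X (x : 'I_M) : x \in X -> cnt X x < #|X|.
Proof. by move=> xX; rewrite -cnt_succ //; apply: cnt_le. Qed.

Lemma cnt_strict X (x y : 'I_M) : x \in X -> x < y -> cnt X x < cnt X y.
Proof. by move=> xX lt; rewrite -cnt_succ //; apply: cnt_mono. Qed.

Lemma cnt_inj X : {in X &, injective (fun x : 'I_M => cnt X x)}.
Proof.
move=> x y xX yX e; apply/val_inj; case: (ltngtP x y) => // h.
  by have := cnt_strict xX h; rewrite e ltnn.
by have := cnt_strict yX h; rewrite e ltnn.
Qed.

Lemma card_prefix m : m <= M -> #|[set x : 'I_M | x < m]| = m.
Proof.
move=> h.
have -> : [set x : 'I_M | x < m] = [set widen_ord h y | y in 'I_m].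
  apply/setP=> x; rewrite inE; apply/idP/imsetP.
    by move=> xm; exists (Ordinal xm) => //; apply/val_inj.
  by case=> y _ ->; rewrite /= ltn_ord.
rewrite card_imset ?card_ord //.
by move=> a b /(congr1 val) /= /val_inj.
Qed.

Lemma cnt_compl X m : m <= M -> cnt X m + cnt (~: X) m = m.
Proof.
move=> h; rewrite -{3}(card_prefix h) /cnt.
have -> : [set x : 'I_M | x < m] = [set x in X | x < m] :|: [set x in ~: X | x < m].
  apply/setP=> x; rewrite !inE. case: (x \in X) => /=; rewrite ?andbT ?orbF //.
rewrite cardsU.
have -> : [set x in X | x < m] :&: [set x in ~: X | x < m] = set0.
  by apply/setP=> x; rewrite !inE; case: (x \in X); rewrite /= ?andbF.
by rewrite cards0 subn0.
Qed.

Lemma card_rank X (P : pred nat) :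
  #|[set x in X | P (cnt X x)]| = count P (iota 0 #|X|).
Proof.
set s := map (fun x : 'I_M => cnt X x) (enum X).
have us : uniq s.
  rewrite map_inj_in_uniq ?enum_uniq //.
  by move=> x y; rewrite !mem_enum; apply: cnt_inj.
have sub : {subset s <= iota 0 #|X|}.
  move=> r /mapP[x]; rewrite mem_enum => xX ->; rewrite mem_iota /=; exact: cnt_lt.
have hs : size (iota 0 #|X|) <= size s by rewrite size_iota size_map -cardE.
have [_ eqs] := uniq_min_size us sub hs.
have pe : perm_eq s (iota 0 #|X|) by apply: uniq_perm => //; apply: iota_uniq.
rewrite -(permP pe) count_map cardE /enum_mem size_filter.
rewrite count_filter; apply: eq_count => x /=; rewrite !inE /=.
by rewrite andbC.
Qed.

End Cnt.

Definition blk M (X : {set 'I_M}) c j :=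
  [set x in X | (j * c <= cnt X x) && (cnt X x < j.+1 * c)].

Lemma count_iota_blk c K j : j < K ->
  count (fun r => (j * c <= r) && (r < j.+1 * c)) (iota 0 (K * c)) = c.
Proof.
move=> jK.
have -> : K * c = j * c + (c + (K - j.+1) * c).
  have [d ->] : exists d, K = j.+1 + d by exists (K - j.+1); lia.
  rewrite addKn mulnDl mulSn; lia.
rewrite iotaD iotaD !count_cat add0n.
rewrite (eq_in_count (a2 := pred0)); last first.
  by move=> r; rewrite mem_iota add0n => /andP[_ h]; rewrite /= leqNgt h.
rewrite count_pred0 add0n.
rewrite (eq_in_count (a2 := predT)); last first.
  by move=> r; rewrite mem_iota mulSn [c + _]addnC => /andP[-> h].
rewrite count_predT size_iota.
rewrite (eq_in_count (a2 := pred0)); last first.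
  by move=> r; rewrite mem_iota mulSn [c + _]addnC => /andP[h _]; rewrite /= ltnNge h andbF.
by rewrite count_pred0 addn0.
Qed.

Lemma card_blk M (X : {set 'I_M}) c K j : #|X| = K * c -> j < K -> #|blk X c j| = c.
Proof.
move=> hX jK; rewrite /blk.
rewrite (card_rank X (fun r => (j * c <= r) && (r < j.+1 * c))) hX.
exact: count_iota_blk.
Qed.

Section Row.
Variables (M m c : nat) (T : nat -> {set 'I_M}).
Hypothesis hsz : forall j, j < m -> #|T j| = c.
Hypothesis hdisj : forall i j, i < j -> j < m -> [disjoint T i & T j].
Hypothesis hincr : forall j x y, j.+1 < m -> x \in T j -> y \in T j.+1 -> x < y.

Definition U k := \bigcup_(j < k) T j.

Lemma memU k x : reflect (exists2 j, j < k & x \in T j) (x \in U k).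
Proof.
apply: (iffP bigcupP).
  by case=> j _ h; exists j.
by case=> j jk h; exists (Ordinal jk).
Qed.

Lemma card_U k : k <= m -> #|U k| = k * c.
Proof.
elim: k => [|k IH] km; first by rewrite /U big_ord0 cards0.
rewrite /U big_ord_recr /= -/(U k) cardsU IH ?(ltnW km) // hsz //.
have -> : U k :&: T k = set0.
  apply/setP=> x; rewrite !inE; apply/negbTE/negP=> /andP[/memU[i ik xi] xk].
  by rewrite (disjointFr (hdisj ik km) xi) in xk.
by rewrite cards0 subn0 mulSn addnC.
Qed.

Lemma nonempty j : j < m -> 0 < c -> exists z, z \in T j.
Proof. by move=> jm c0; move: c0; rewrite -(hsz jm) card_gt0 => /set0Pn. Qed.

Lemma trans i j x y : 0 < c -> i < j -> j < m -> x \in T i -> y \in T j -> x < y.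
Proof.
move=> c0 ij jm xi; have -> : j = i + (j - i).-1.+1 by lia.
have : i + (j - i).-1.+1 < m by lia.
move: (j - i).-1 => d; elim: d y => [|d IH] y dm yj.
  by rewrite addn1 in dm yj; exact: hincr xi yj.
rewrite addnS in dm yj.
have [z zT] := nonempty (ltnW dm) c0.
have xz : x < z by apply: IH => //; apply: ltnW.
have zy : z < y by apply: (hincr (j := i + d.+1)) zT _.
exact: ltn_trans xz zy.
Qed.

Lemma rank j x : j < m -> x \in T j -> cnt (U m) x = j * c + cnt (T j) x.
Proof.
move=> jm xj.
have c0 : 0 < c by rewrite -(hsz jm) card_gt0; apply/set0Pn; exists x.
rewrite /cnt.
have -> : [set y in U m | y < x] = U j :|: [set y in T j | y < x].
  apply/setP=> y; rewrite !inE; apply/idP/idP.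
    case/andP=> /memU[i im yi] yx.
    case: (ltngtP i j) => [ij|ji|e].
    - by apply/orP; left; apply/memU; exists i.
    - by have := trans c0 ji im xj yi; rewrite ltnNge (ltnW yx).
    - by rewrite -e yi yx orbT.
  case/orP=> [/memU[i ij yi]|/andP[yj yx]].
    rewrite (trans c0 ij jm yi xj) andbT; apply/memU; exists i => //.
    exact: ltn_trans jm.
  by rewrite yx andbT; apply/memU; exists j.
rewrite cardsU card_U ?(ltnW jm) //.
have -> : U j :&: [set y in T j | y < x] = set0.
  apply/setP=> y; rewrite !inE; apply/negbTE/negP=> /andP[/memU[i ij yi] /andP[yj _]].
  by rewrite (disjointFr (hdisj ij jm) yi) in yj.
by rewrite cards0 subn0.
Qed.

Lemma rank_bounds j x : j < m -> x \in T j ->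
  (j * c <= cnt (U m) x) && (cnt (U m) x < j.+1 * c).
Proof.
move=> jm xj; rewrite (rank jm xj) leq_addr /= mulSn.
have := cnt_lt xj; rewrite hsz //; lia.
Qed.

Lemma blk_char j x : j < m -> x \in U m -> (x \in T j) = (x \in blk (U m) c j).
Proof.
move=> jm xU; rewrite /blk inE xU /=; apply/idP/idP; first exact: rank_bounds.
move/memU: xU => [i im xi] hj.
have c0 : 0 < c by rewrite -(hsz im) card_gt0; apply/set0Pn; exists x.
have := rank_bounds im xi; move: hj.
move: (cnt (U m) x) => r /andP[h1 h2] /andP[h3 h4].
suff -> : j = i by [].
apply/eqP; rewrite eqn_leq.
rewrite -ltnS -(ltn_pmul2r c0) (leq_ltn_trans h1 h4) /=.
by rewrite -ltnS -(ltn_pmul2r c0) (leq_ltn_trans h3 h2).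
Qed.

End Row.

Lemma disj_blk M (X : {set 'I_M}) c i j : i < j -> [disjoint blk X c i & blk X c j].
Proof.
move=> ij; rewrite -setI_eq0; apply/eqP/setP=> x; rewrite !inE.
apply/negbTE/negP=> /andP[/andP[_ /andP[_ h1]] /andP[_ /andP[h2 _]]].
have : i.+1 * c <= j * c by apply: leq_mul.
move: (cnt X x) h1 h2 => r; lia.
Qed.

Lemma mem_blk_div M (X : {set 'I_M}) c (x : 'I_M) : 0 < c -> x \in X ->
  x \in blk X c (cnt X x %/ c).
Proof.
move=> c0 xX; rewrite inE xX leq_divM /=; exact: ltn_ceil.
Qed.

Definition lgood s t n (L : {set 'I_(n * s)}) : bool :=
  (#|L| == n * t) && [forall k : 'I_n.+1, k * t <= cnt L (k * s)].
Arguments lgood : clear implicits.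

Section Lawn.
Variables s t n : nat.
Hypothesis ht : 1 <= t.

Lemma run_good (R : {ffun 'I_n -> {set 'I_(n * s)}}) :
  tennis_run t R -> lgood s t n (lawn R).
Proof.
move/forallP=> hR.
pose T j := oapp R set0 (insub j : option 'I_n).
have TR j (h : j < n) : T j = R (Ordinal h) by rewrite /T insubT.
have hsz j : j < n -> #|T j| = t.
  by move=> h; rewrite TR; case/andP: (hR (Ordinal h)) => /andP[/eqP] .
have hdisj i j : i < j -> j < n -> [disjoint T i & T j].
  move=> ij jn; rewrite !TR ?(ltn_trans ij jn) // => h.
  case/andP: (hR (Ordinal jn)) => _ /forallP/(_ (Ordinal h)) /implyP; apply; exact: ij.
have hb j x : j < n -> x \in T j -> x < j.+1 * s.
  move=> jn; rewrite TR; case/andP: (hR (Ordinal jn)) => /andP[_ /forallP hh] _ xR.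
  by have := hh x; rewrite xR.
have lawnU : lawn R = U T n.
  apply/setP=> x; apply/bigcupP/memU.
    by case=> i _ xi; exists i; rewrite ?ltn_ord // /T valK.
  by case=> j jn; rewrite TR => xi; exists (Ordinal jn).
rewrite /lgood lawnU (card_U hsz hdisj (leqnn n)) eqxx /=.
apply/forallP=> k; rewrite -(card_U hsz hdisj (ltnSE (ltn_ord k))).
apply: subset_leq_card; apply/subsetP=> x xU; rewrite inE.
have := xU; move/memU=> [j jk xj].
have jn : j < n by apply: leq_trans jk (ltnSE (ltn_ord k)).
apply/andP; split.
  by apply/memU; exists j.
by apply: leq_trans (hb j x jn xj) _; apply: leq_mul.
Qed.

Lemma good_run (L : {set 'I_(n * s)}) : lgood s t n L ->
  exists R, tennis_run t R && (L == lawn R).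
Proof.
case/andP=> /eqP hL /forallP hk.
exists [ffun i : 'I_n => blk L t i]; apply/andP; split.
  apply/forallP=> i; rewrite ffunE -andbA; apply/and3P; split.
  - by rewrite (card_blk hL (ltn_ord i)).
  - apply/forallP=> x; apply/implyP; rewrite inE => /andP[xL /andP[_ h]].
    rewrite ltnNge; apply/negP=> hx.
    have := hk (Ordinal (ltn_ord i : i.+1 < n.+1)) => /= h2.
    have := cnt_mono L hx; lia.
  - apply/forallP=> j; apply/implyP=> ji; rewrite ffunE; exact: disj_blk.
apply/eqP/setP=> x; apply/idP/bigcupP.
  move=> xL; have hlt : cnt L x %/ t < n by rewrite ltn_divLR // -hL cnt_lt.
  by exists (Ordinal hlt) => //; rewrite ffunE /=; apply: mem_blk_div.
by case=> i _; rewrite ffunE inE => /andP[].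
Qed.

Lemma lawn_char : tennisB s t n = #|[set L : {set 'I_(n * s)} | lgood s t n L]|.
Proof.
apply: eq_card => L; rewrite !inE; apply/existsP/idP.
  by case=> R /andP[hR /eqP ->]; apply: run_good.
by move/good_run => [R h]; exists R.
Qed.
End Lawn.

Lemma cnt_all M (X : {set 'I_M}) m (x : 'I_M) : #|X| <= cnt X m -> x \in X -> x < m.
Proof.
move=> h xX.
have e : [set z in X | z < m] == X.
  by rewrite eqEcard h andbT; apply/subsetP=> z; rewrite inE => /andP[].
by move: xX; rewrite -(eqP e) inE => /andP[].
Qed.

Lemma cnt_pre M (X : {set 'I_M}) m (x : 'I_M) : m <= M -> m <= cnt X m -> x < m -> x \in X.
Proof.
move=> mM h xm.
have e : [set z in X | z < m] == [set z : 'I_M | z < m].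
  rewrite eqEcard card_prefix // h andbT.
  by apply/subsetP=> z; rewrite !inE => /andP[].
have : x \in [set z : 'I_M | z < m] by rewrite inE.
by rewrite -(eqP e) inE => /andP[].
Qed.

Definition sgood s t n N (X : {set 'I_N}) : bool :=
  (#|X| == n.+1 * t) && [forall k : 'I_n.+1, k.+1 * t <= cnt X (k * s + t)].
Arguments sgood : clear implicits.

Section Mid.
Variables s t n N : nat.
Hypothesis hts : t <= s.
Hypothesis hN : N = n.+1 * s.

Lemma shlt (y : 'I_(n * s)) : y + t < N.
Proof. have := ltn_ord y; rewrite hN mulSn; lia. Qed.

Definition shift (y : 'I_(n * s)) : 'I_N := Ordinal (shlt y).

Lemma shift_inj : injective shift.
Proof. by move=> a b /(congr1 val) /= /addIn /val_inj. Qed.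

Definition g (L : {set 'I_(n * s)}) : {set 'I_N} :=
  [set x : 'I_N | x < t] :|: shift @: L.

Lemma tN : t <= N.
Proof. rewrite hN mulSn; lia. Qed.

Lemma mem_g y L : (shift y \in g L) = (y \in L).
Proof.
rewrite !inE /= ltnNge leq_addl /=; apply/imsetP/idP.
  by case=> z zL /shift_inj ->.
by move=> yL; exists y.
Qed.

Lemma cnt_g L m : cnt (g L) (m + t) = t + cnt L m.
Proof.
rewrite /cnt.
have -> : [set x in g L | x < m + t] =
          [set x : 'I_N | x < t] :|: shift @: [set y in L | y < m].
  apply/setP=> x; rewrite !inE; apply/idP/idP.
    case/andP=> /orP[->//|/imsetP[y yL ->]] /=; rewrite ltn_add2r => ym.
    by apply/orP; right; apply/imsetP; exists y => //; rewrite inE yL.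
  case/orP=> [xt|/imsetP[y]]; first by rewrite xt (leq_trans xt) ?leq_addl.
  rewrite inE => /andP[yL ym] ->; rewrite /= ltn_add2r ym andbT.
  by apply/orP; right; apply/imsetP; exists y.
rewrite cardsU card_prefix ?tN // card_imset; last exact: shift_inj.
have -> : [set x : 'I_N | x < t] :&: shift @: [set y in L | y < m] = set0.
  apply/setP=> x; rewrite !inE; apply/negbTE/negP=> /andP[xt /imsetP[y _ e]].
  by move: xt; rewrite e /= ltnNge leq_addl.
by rewrite cards0 subn0.
Qed.

Lemma card_g L : #|g L| = t + #|L|.
Proof.
rewrite cardsU card_prefix ?tN // card_imset; last exact: shift_inj.
have -> : [set x : 'I_N | x < t] :&: shift @: L = set0.
  apply/setP=> x; rewrite !inE; apply/negbTE/negP=> /andP[xt /imsetP[y _ e]].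
  by move: xt; rewrite e /= ltnNge leq_addl.
by rewrite cards0 subn0.
Qed.

Lemma g_inj : injective g.
Proof. by move=> L1 L2 e; apply/setP=> y; rewrite -!mem_g e. Qed.

Lemma mid : #|[set X : {set 'I_N} | sgood s t n N X]| =
            #|[set L : {set 'I_(n * s)} | lgood s t n L]|.
Proof.
rewrite -(card_imset _ g_inj); apply: eq_card => X; rewrite !inE.
apply/idP/imsetP.
  case/andP=> /eqP hX /forallP hk.
  pose L := [set y | shift y \in X].
  have gL : g L = X.
    apply/setP=> x; apply/idP/idP.
      rewrite inE => /orP[xt|/imsetP[y]]; last by rewrite inE => h ->.
      have h0 : t <= cnt X t by have := hk ord0; rewrite /= mul0n mul1n add0n.
      by apply: cnt_pre tN h0 _; rewrite inE in xt.
    move=> xX; rewrite /g !inE; case: (ltnP x t) => [//|tx]; apply/orP; right.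
    have xlt : x < n * s + t.
      apply: (cnt_all _ xX); rewrite hX; exact: (hk ord_max).
    have h : x - t < n * s by lia.
    apply/imsetP; exists (Ordinal h); last by apply/val_inj; rewrite /= subnK.
    rewrite inE; have -> : shift (Ordinal h) = x by apply/val_inj; rewrite /= subnK.
    exact: xX.
  exists L => //; rewrite inE /lgood; apply/andP; split.
    by rewrite -gL card_g mulSn in hX; apply/eqP; move/eqP: hX; rewrite eqn_add2l => /eqP.
  apply/forallP=> k; have := hk k; rewrite -gL cnt_g mulSn; lia.
case=> L; rewrite inE => /andP[/eqP hL /forallP hk] ->.
rewrite /sgood card_g hL mulSn eqxx /=; apply/forallP=> k.
by rewrite cnt_g mulSn leq_add2l.
Qed.
End Mid.

Lemma hC n : shape_cols [:: n.+1; n.+1] = n.+1.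
Proof. by rewrite /shape_cols !big_cons big_nil maxn0 maxnn. Qed.
Lemma hN s t n : t <= s -> svt_N [:: n.+1; n.+1] (tennis_rho s t) = n.+1 * s.
Proof.
move=> hts; rewrite /svt_N big_ord_recl big_ord_recl big_ord0 /=.
rewrite !sum_nat_const !card_ord /tennis_rho /= addn0 -mulnDr subnKC //.
Qed.

Lemma blk_lt M (X : {set 'I_M}) c i j (x y : 'I_M) : i < j ->
  x \in blk X c i -> y \in blk X c j -> x < y.
Proof.
move=> ij; rewrite !inE => /andP[_ /andP[_ h1]] /andP[_ /andP[h2 _]].
rewrite ltnNge; apply/negP=> yx.
have := cnt_mono X yx; have : i.+1 * c <= j * c by apply: leq_mul.
move: (cnt X x) (cnt X y) h1 h2 => a b; lia.
Qed.

Section SVT.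
Variables s t n : nat.
Hypothesis ht : 1 <= t.
Hypothesis hts : t <= s.

Notation lam := [:: n.+1; n.+1].
Notation rho := (tennis_rho s t).
Notation N := (svt_N lam rho).
Notation C := (shape_cols lam).
Notation cellT := (cell lam).
Notation Sty := {ffun cellT -> {set 'I_N}}.

Definition r0 : 'I_2 := ord0.
Definition r1 : 'I_2 := Ordinal (isT : 1 < 2).

Lemma r01 (r : 'I_2) : r = r0 \/ r = r1.
Proof. by case: r => [[|[|i]] h] //; [left|right]; apply: val_inj. Qed.

Definition cr (r : nat) := if r == 0 then t else s - t.

Lemma inS (a : cellT) : in_shape lam a.1 a.2.
Proof.
by case: a => [[[|[|i]] hi] j] //=; rewrite /in_shape /= (leq_trans (ltn_ord j) (eq_leq (hC n))).
Qed.

Lemma ltC j : j < n.+1 -> j < C.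
Proof. by rewrite hC. Qed.

Definition TS (S : Sty) (r : 'I_2) (j : nat) : {set 'I_N} :=
  oapp (fun j' : 'I_C => S (r, j')) set0 (insub j).

Lemma TS_val S r (j : 'I_C) : TS S r j = S (r, j).
Proof. by rewrite /TS valK. Qed.

Lemma TS_lt S r j (h : j < n.+1) : TS S r j = S (r, Ordinal (ltC h)).
Proof.
rewrite /TS; case: insubP => [u _ e|/negP[]]; last exact: ltC h.
by congr (S (r, _)); apply: val_inj; rewrite /= e.
Qed.

Definition Asv (S : Sty) := U (TS S r0) n.+1.

Section Props.
Variable S : Sty.
Hypothesis hS : is_svt S.

Lemma hsz r j : j < n.+1 -> #|TS S r j| = cr r.
Proof.
move=> jn; rewrite TS_lt; move: hS => /andP[/andP[/andP[/forallP h _] _] _].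
by have := h (r, Ordinal (ltC jn)); rewrite inS => /eqP ->.
Qed.

Lemma hdisj r i j : i < j -> j < n.+1 -> [disjoint TS S r i & TS S r j].
Proof.
move=> ij jn; rewrite !TS_lt ?(ltn_trans ij jn) //= => h.
move: hS => /andP[/andP[/andP[_ /forallP hd] _] _].
have := hd (r, Ordinal (ltC h)) => /forallP /(_ (r, Ordinal (ltC jn))) /implyP; apply.
by apply/negP=> /eqP [e]; rewrite e ltnn in ij.
Qed.

Lemma hincr r j x y : j.+1 < n.+1 -> x \in TS S r j -> y \in TS S r j.+1 -> x < y.
Proof.
move=> jn; rewrite (TS_lt _ _ (ltnW jn)) (TS_lt _ _ jn) => xa yb.
move: hS => /andP[_ /forallP hi].
have := hi (r, Ordinal (ltC (ltnW jn))) => /forallP /(_ (r, Ordinal (ltC jn))).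
rewrite !inS /= !eqxx /= => /forallP /(_ x) /implyP /(_ xa) /forallP /(_ y) /implyP.
by apply.
Qed.

Lemma hcol j x y : j < n.+1 -> x \in TS S r0 j -> y \in TS S r1 j -> x < y.
Proof.
move=> jn; rewrite !(TS_lt _ _ jn) => xa yb.
move: hS => /andP[_ /forallP hi].
have := hi (r0, Ordinal (ltC jn)) => /forallP /(_ (r1, Ordinal (ltC jn))).
rewrite !inS /= !eqxx /= => /forallP /(_ x) /implyP /(_ xa) /forallP /(_ y) /implyP.
by apply.
Qed.

Lemma hcover x : (x \in U (TS S r0) n.+1) || (x \in U (TS S r1) n.+1).
Proof.
move: hS => /andP[/andP[_ /eqP hc] _].
have : x \in \bigcup_(a : cellT) S a by rewrite hc inE.
case/bigcupP=> [[r j] _ xa].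
have jn : j < n.+1 := leq_trans (ltn_ord j) (eq_leq (hC n)).
have xT : x \in TS S r j by rewrite TS_val.
by case: (r01 r) => e; subst r; apply/orP; [left|right]; apply/memU; exists j.
Qed.

Lemma hrows x : x \in U (TS S r0) n.+1 -> x \in U (TS S r1) n.+1 -> False.
Proof.
move=> /memU [i ilt xi] /memU [j jlt xj].
move: hS => /andP[/andP[/andP[_ /forallP hd] _] _].
move: xi xj; rewrite (TS_lt _ _ ilt) (TS_lt _ _ jlt) => xi xj.
have := hd (r0, Ordinal (ltC ilt)) => /forallP /(_ (r1, Ordinal (ltC jlt))) /implyP.
move/(_ isT) => hdj.
by rewrite (disjointFr hdj xi) in xj.
Qed.

Lemma U1_compl : U (TS S r1) n.+1 = ~: Asv S.
Proof.
apply/setP=> x; rewrite inE /Asv; have := hcover x.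
case: (boolP (x \in U (TS S r0) n.+1)) => h0 /= h1.
  by apply/negbTE/negP=> h; exact: hrows h0 h.
by [].
Qed.

Lemma TS_blk r j : j < n.+1 -> TS S r j = blk (U (TS S r) n.+1) (cr r) j.
Proof.
move=> jn; apply/setP=> x.
case: (boolP (x \in U (TS S r) n.+1)) => xU.
  exact: (blk_char (hsz r) (hdisj r) (hincr (r:=r)) jn xU).
rewrite /blk inE (negbTE xU) /=; apply/negbTE/negP=> xT.
by move/negP: xU; apply; apply/memU; exists j.
Qed.

End Props.

Lemma Asv_inj : {in [set S | is_svt S] &, injective Asv}.
Proof.
move=> S1 S2; rewrite !inE => h1 h2 e; apply/ffunP=> [[r j]].
have jn : j < n.+1 := leq_trans (ltn_ord j) (eq_leq (hC n)).
rewrite -!TS_val !(TS_blk _ _ jn) //.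
case: (r01 r) => ->; first by rewrite -/(Asv S1) -/(Asv S2) e.
by rewrite !U1_compl // e.
Qed.

Lemma svt_good S : is_svt S -> sgood s t n N (Asv S).
Proof.
move=> hS; rewrite /sgood /Asv (card_U (hsz hS r0) (hdisj hS r0) (leqnn _)) eqxx /=.
apply/forallP=> k; rewrite leqNgt; apply/negP=> hlt.
move: hlt; set A := U (TS S r0) n.+1; set B := U (TS S r1) n.+1 => hlt.
have hBc : B = ~: A := U1_compl hS.
have kn : k <= n := ltnSE (ltn_ord k).
have mN : k * s + t <= N.
  rewrite hN // mulSn; have : k * s <= n * s by apply: leq_mul.
  lia.
have hc := cnt_compl A mN.
have hB : k * (s - t) < cnt B (k * s + t).
  rewrite hBc mulnBr; have : k * t <= k * s by apply: leq_mul.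
  rewrite mulSn in hlt; lia.
set D := [set z in B | z < k * s + t].
have [y0 y0D] : exists y0, y0 \in D.
  by apply/set0Pn; rewrite -card_gt0; apply: leq_ltn_trans hB.
have [y yD ymax] : exists2 y, y \in D & forall z, z \in D -> z <= y.
  by case: (@arg_maxnP _ y0 (mem D) val y0D) => y yD ymax; exists y.
move: (yD); rewrite inE => /andP[yB ym].
have hy : k * (s - t) <= cnt B y.
  have : cnt B (k * s + t) <= cnt B y.+1.
    apply: subset_leq_card; apply/subsetP=> z zD; rewrite inE.
    have := ymax z zD; move: zD; rewrite inE => /andP[-> _] /=; by rewrite ltnS.
  rewrite cnt_succ //; lia.
move/memU: (yB) => [j jn yj].
have st0 : 0 < s - t.
  have := hsz hS r1 jn; rewrite /cr /= => <-; rewrite card_gt0; apply/set0Pn; exists y => //.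
have := rank_bounds (hsz hS r1) (hdisj hS r1) (hincr hS (r:=r1)) jn yj.
rewrite -/B => /andP[_ hj].
have kj : k <= j.
  by rewrite -ltnS -(ltn_pmul2r st0); apply: leq_ltn_trans hy hj.
have : k.+1 * t <= cnt A (k * s + t).
  rewrite -(card_U (hsz hS r0) (hdisj hS r0) (ltn_ord k)).
  apply: subset_leq_card; apply/subsetP=> x /memU [i ik xi]; rewrite inE.
  have ij : i <= j by apply: leq_trans kj.
  have iN : i < n.+1 by apply: leq_ltn_trans jn.
  have xy : x < y.
    case: (ltngtP i j) => [lij|ji|eij].
    - have [z zi] := nonempty (hsz hS r1) iN st0.
      have xz : x < z by apply: (hcol hS iN).
      apply: ltn_trans xz _.
      exact: (trans (hsz hS r1) (hincr hS (r:=r1)) st0 lij jn zi yj).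
    - by rewrite ltnNge ij in ji.
    - move: xi; rewrite eij => xi. exact: (@hcol S hS j x y jn xi yj).
  rewrite (ltn_trans xy ym) andbT; apply/memU; exists i => //.
by rewrite leqNgt hlt.
Qed.

Definition mkS (X : {set 'I_N}) : Sty :=
  [ffun a : cellT => if (a.1 : nat) == 0 then blk X t a.2 else blk (~: X) (s - t) a.2].

Lemma mN j : j < n.+1 -> j * s + t <= N.
Proof.
move=> jn; rewrite hN // mulSn; have : j * s <= n * s by apply: leq_mul.
lia.
Qed.

Lemma col_mk X j x y : sgood s t n N X -> j < n.+1 ->
  x \in blk X t j -> y \in blk (~: X) (s - t) j -> x < y.
Proof.
move=> /andP[_ /forallP hk] jn; rewrite !inE => /andP[xX /andP[_ hx]] /andP[yX /andP[hy _]].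
have := hk (Ordinal jn) => /= hj.
have mj := mN jn.
have xm : x < j * s + t.
  rewrite ltnNge; apply/negP=> h; have := cnt_mono X h; lia.
rewrite ltnNge; apply/negP=> yx.
have hc := cnt_compl X mj.
have yX' : y \in ~: X by rewrite inE.
have h1 := cnt_succ yX'.
have h2 : cnt (~: X) y.+1 <= cnt (~: X) (j * s + t).
  apply: cnt_mono; apply: leq_ltn_trans yx xm.
have : j * t <= j * s by apply: leq_mul.
rewrite mulnBr in hy; rewrite mulSn in hj; lia.
Qed.

Lemma cardC (X : {set 'I_N}) : #|X| = n.+1 * t -> #|~: X| = n.+1 * (s - t).
Proof.
move=> hX; have := cardsC X; rewrite card_ord hX => e.
have e2 := hN n hts; have : n.+1 * t <= n.+1 * s by apply: leq_mul.
rewrite mulnBr; lia.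
Qed.

Lemma ltCd (j : 'I_C) : j < n.+1.
Proof. exact: leq_trans (ltn_ord j) (eq_leq (hC n)). Qed.

Lemma disj_X (X : {set 'I_N}) c c' j j' : [disjoint blk X c j & blk (~: X) c' j'].
Proof.
rewrite -setI_eq0; apply/eqP/setP=> x; rewrite !inE.
by case: (x \in X); rewrite /= ?andbF.
Qed.

Lemma mkS_svt X : sgood s t n N X -> is_svt (mkS X).
Proof.
move=> hX; have hX' := hX; move: hX' => /andP[/eqP hc _].
have hcc := cardC hc.
rewrite /is_svt -!andbA; apply/and4P; split.
- apply/forallP=> [[r j]]; rewrite inS ffunE /=.
  by case: (r01 r) => -> /=; rewrite (card_blk _ (ltCd j)).
- apply/forallP=> [[r j]]; apply/forallP=> [[r' j']]; apply/implyP=> neq; rewrite !ffunE /=.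
  case: (r01 r) => er; case: (r01 r') => er'; rewrite er er' /= in neq *; rewrite ?disj_X //.
  + case: (ltngtP j j') => [lt|gt|eq]; first exact: disj_blk.
      by rewrite disjoint_sym; exact: disj_blk.
    by move: neq; rewrite (val_inj eq) eqxx.
  + by rewrite disjoint_sym disj_X.
  + case: (ltngtP j j') => [lt|gt|eq]; first exact: disj_blk.
      by rewrite disjoint_sym; exact: disj_blk.
    by move: neq; rewrite (val_inj eq) eqxx.
- apply/eqP/setP=> x; rewrite inE; apply/bigcupP.
  case: (boolP (x \in X)) => xX.
    have hl : cnt X x %/ t < n.+1 by rewrite ltn_divLR // -hc cnt_lt.
    by exists (r0, Ordinal (ltC hl)) => //; rewrite ffunE /=; apply: mem_blk_div.
  have st0 : 0 < s - t.
    rewrite lt0n; apply/negP=> /eqP e; move: hcc; rewrite e muln0 => /eqP.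
    by rewrite cards_eq0 => /eqP e'; move: xX; rewrite -in_setC e' inE.
  have hl : cnt (~: X) x %/ (s - t) < n.+1 by rewrite ltn_divLR // -hcc cnt_lt // inE.
  by exists (r1, Ordinal (ltC hl)) => //; rewrite ffunE /=; apply: mem_blk_div; rewrite ?inE.
- apply/forallP=> [[r j]]; apply/forallP=> [[r' j']]; rewrite !inS /=.
  apply/implyP=> hcond; apply/forallP=> x; apply/implyP=> xa; apply/forallP=> y; apply/implyP.
  move: xa; rewrite !ffunE /=.
  case: (r01 r) => er; case: (r01 r') => er'; rewrite er er' /= in hcond * => xa yb;
    rewrite ?orbF /= in hcond.
  + by apply: (blk_lt _ xa yb); rewrite (eqP hcond).
  + by rewrite (eqP hcond) in yb; exact: col_mk hX (ltCd j) xa yb.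
  + by [].
  + by apply: (blk_lt _ xa yb); rewrite (eqP hcond).
Qed.

Lemma Asv_mkS X : sgood s t n N X -> Asv (mkS X) = X.
Proof.
move=> /andP[/eqP hc _]; apply/setP=> x; apply/memU/idP.
  case=> j jn; rewrite (TS_lt _ _ jn) ffunE /= inE => /andP[] //.
move=> xX; have hl : cnt X x %/ t < n.+1 by rewrite ltn_divLR // -hc cnt_lt.
by exists (cnt X x %/ t) => //; rewrite (TS_lt _ _ hl) ffunE /=; apply: mem_blk_div.
Qed.

Lemma svt_count : nSVT lam rho = #|[set X : {set 'I_N} | sgood s t n N X]|.
Proof.
rewrite /nSVT -(card_in_imset Asv_inj); apply: eq_card => X; rewrite !inE.
apply/imsetP/idP.
  by case=> S; rewrite inE => hS ->; apply: svt_good.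
by move=> hX; exists (mkS X); rewrite ?inE ?mkS_svt ?Asv_mkS.
Qed.

End SVT.

Theorem theorem4 (s t n : nat) (ht : 1 <= t) (hts : t <= s) :
  tennisB s t n = nSVT [:: n.+1; n.+1] (tennis_rho s t).
Proof.
rewrite lawn_char // svt_count //; symmetry; apply: mid => //; exact: hN.
Qed.
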